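(* Let $\ell$ be a prime dividing $N$ and $s$ the $\ell$-adic valuation of $N$. Suppose that $H$ has a $U_\ell$-operator that acts on $H^\theta$ as multiplication by an element of $\mathcal{O}^\times$. Then $H^\theta$ is the $\mathcal{O}$-span of the elements of the forms $\alpha^{g,h}_{\chi,\psi}$ and $\alpha^{\ell^sg,h}_{\chi,\psi}$ with $\chi\in X_N$, $\psi=\theta\chi^{-1}$, and $g,h$ relatively prime divisors of $N$ with $\ell\nmid gh$ (where, if $H$ is cuspidal at zero, elements with $g$ or $h$ equal to $N$ in the superscript are excluded).
   Context: $p$ is an odd prime, $M$ a positive integer with $p\nmid M\varphi(M)$, $N=Mp$, $\Delta=(\mathbb{Z}/N\mathbb{Z})^\times/\langle-1\rangle$. $H$ is either a space of level $N$ modular symbols — a $\mathbb{Z}_p[\Delta]$-module spanned by symbols $[u:v]$ ($u,v\in\mathbb{Z}/N\mathbb{Z}$ generating the unit ideal) with relations $[u:v]=[-u:-v]=-[-v:u]$, $[u:v]=[u:u+v]+[u+v:v]$, $\langle a\rangle[u:v]=[au:av]$ — or a space of level $N$ cuspidal-at-zero modular symbols, defined the same way but with symbols only for $u,v$ both nonzero and the second relation only for $u\neq-v$. For a prime $\ell\mid N$, a $U_\ell$-operator is a $\mathbb{Z}_p[\Delta]$-linear endomorphism $U_\ell$ of $H$ with $U_\ell[\ell u:v]=\sum_{k=0}^{\ell-1}[u+kN/\ell:v]$ for all $u,v$ with $(\ell u,v)=(1)$ (and $\ell u\neq0$ if $H$ is cuspidal at zero). $\theta:\Delta\to\mathbb{C}_p^\times$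 is a character, $\mathcal{O}=\mathbb{Z}_p[\mu_{\varphi(N)}]$, $X_N=\mathrm{Hom}((\mathbb{Z}/N\mathbb{Z})^\times,\mathcal{O}^\times)$, $e_\theta=\frac1{\varphi(N)}\sum_a\theta^{-1}(a)\langle a\rangle$, $H^\theta=e_\theta(H\otimes\mathcal{O})$, and $\alpha^{g,h}_{\chi,\psi}=\frac1{\varphi(N)^2}\sum_{a,b\in(\mathbb{Z}/N\mathbb{Z})^\times}\chi^{-1}(a)\psi^{-1}(b)[ga:hb]$. *)

(* Defs.v *)
From HB Require Import structures.
From mathcomp Require Import all_boot all_order all_fingroup all_algebra.
Set Implicit Arguments. Unset Strict Implicit. Unset Printing Implicit Defensive.
Import GRing.Theory.
Local Open Scope ring_scope.

(* The ideal (u, v) of Z/NZ is the unit ideal: gcd(u, v, N) = 1 (u, v read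
   as their representatives in [0, N)). *)
Definition unimod (N : nat) (u v : 'Z_N) : bool :=
  gcdn (gcdn (val u) (val v)) N == 1%N.

(* (u, v) indexes a symbol [u:v] of the space: unimodular, and in the
   cuspidal-at-zero case both entries are nonzero. *)
Definition valid_pair (cusp : bool) (N : nat) (u v : 'Z_N) : bool :=
  unimod u v && (cusp ==> (u != 0) && (v != 0)).

Definition Olinear (O : pzRingType) (V : lmodType O) (f : V -> V) : Prop :=
  forall (k : O) (x y : V), f (k *: x + y) = k *: f x + f y.

Definition in_span (O : pzRingType) (V : lmodType O) (S : V -> Prop) (x : V)
  : Prop :=
  exists (n : nat) (c : 'I_n -> O) (s : 'I_n -> V),
    (forall i, S (s i)) /\ x = \sum_(i < n) c i *: s i.

(* V is a space of level-N modular symbols (cusp = false) or of level-N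
   cuspidal-at-zero modular symbols (cusp = true), over the scalars O, with
   symbol map sym (only its values on valid pairs are meaningful) and
   diamond operators diam a = <a>. *)
Definition modsym_space (cusp : bool) (N : nat) (O : pzRingType)
  (V : lmodType O) (sym : 'Z_N -> 'Z_N -> V) (diam : {unit 'Z_N} -> V -> V)
  : Prop :=
  (forall x : V, in_span (fun y => exists u v, valid_pair cusp u v /\ y = sym u v) x) /\
  [/\ forall u v, valid_pair cusp u v -> sym u v = sym (- u) (- v),
      forall u v, valid_pair cusp u v -> sym u v = - sym (- v) u,
      forall u v, valid_pair cusp u v -> (cusp ==> (u != - v)) ->
                  sym u v = sym u (u + v) + sym (u + v) v,
      forall a, Olinear (diam a) &
      forall a u v, valid_pair cusp u v ->
                  diam a (sym u v) = sym (val a * u) (val a * v)].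

Definition U_op (cusp : bool) (N : nat) (O : pzRingType) (V : lmodType O)
  (sym : 'Z_N -> 'Z_N -> V) (diam : {unit 'Z_N} -> V -> V) (ell : nat)
  (U : V -> V) : Prop :=
  [/\ Olinear U,
      forall a x, U (diam a x) = diam a (U x) &
      forall u v : 'Z_N, valid_pair cusp (ell%:R * u) v ->
        U (sym (ell%:R * u) v) =
          \sum_(k < ell) sym (u + (k * (N %/ ell))%:R) v].

Definition is_char (N : nat) (O : pzRingType) (chi : {unit 'Z_N} -> O) : Prop :=
  chi 1%g = 1 /\ forall a b, chi (a * b)%g = chi a * chi b.

(* A character of Delta = (Z/NZ)^x / <-1>, viewed as a character of
   (Z/NZ)^x that is trivial on -1. *)
Definition is_char_Delta (N : nat) (O : pzRingType) (th : {unit 'Z_N} -> O)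
  : Prop :=
  is_char th /\ forall a b : {unit 'Z_N}, val a = - val b -> th a = th b.

Definition etheta (N : nat) (O : unitRingType) (V : lmodType O)
  (diam : {unit 'Z_N} -> V -> V) (th : {unit 'Z_N} -> O) (x : V) : V :=
  ((totient N)%:R)^-1 *: \sum_(a : {unit 'Z_N}) th (a^-1)%g *: diam a x.

Definition alpha (N : nat) (O : unitRingType) (V : lmodType O)
  (sym : 'Z_N -> 'Z_N -> V) (g h : nat) (chi psi : {unit 'Z_N} -> O) : V :=
  (((totient N)%:R) ^+ 2)^-1 *:
    \sum_(a : {unit 'Z_N}) \sum_(b : {unit 'Z_N})
       (chi (a^-1)%g * psi (b^-1)%g) *: sym (g%:R * val a) (h%:R * val b).

(* Main.v *)
Require Import Defs.
From Stdlib Require List.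
From HB Require Import structures.
From mathcomp Require Import all_boot all_order all_fingroup all_algebra.
From mathcomp Require Import all_solvable ring zify.
Set Implicit Arguments. Unset Strict Implicit. Unset Printing Implicit Defensive.
Import GRing.Theory.
Local Open Scope ring_scope.

Section Chars.
Variables (gT : finGroupType) (O : idomainType).

Definition char_on (A : {set gT}) (f : gT -> O) : Prop :=
  f 1%g = 1 /\ {in A &, forall a b, f (a * b)%g = f a * f b}.

Definition dspan (A : {set gT}) (s : seq (O * (gT -> O))) : Prop :=
  (forall p, List.In p s -> char_on A p.2) /\
  {in A, forall z, \sum_(p <- s) p.1 * p.2 z = (z == 1%g)%:R}.

Section Cyc.
Variables (x : gT) (w : O).
Hypothesis hw : #[x]%g.-primitive_root w.
Hypothesis he : (#[x]%g)%:R \is a @GRing.unit O.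

Let e := #[x]%g.
Definition lg (y : gT) : nat :=
  odflt 0%N (omap (@nat_of_ord _) [pick i : 'I_e | (x ^+ i == y)%g]).

Lemma lgP y : y \in <[x]>%g -> (x ^+ lg y)%g = y.
Proof.
case/cyclePmin=> i hi ->; rewrite /lg; case: pickP => [j /eqP -> //|].
by move/(_ (Ordinal hi)); rewrite eqxx.
Qed.

Lemma lg_eq1 y : y \in <[x]>%g -> (w ^+ lg y == 1) = (y == 1%g).
Proof.
by move=> hy; rewrite -(prim_order_dvd hw) order_dvdn lgP.
Qed.

Lemma cyc_dspan : exists s, dspan <[x]>%g s.
Proof.
exists [seq (e%:R^-1, fun y => w ^+ (j * lg y)) | j <- iota 0 e]; split.
  move=> p /List.in_map_iff [j [<- _]] /=; split.
    have h1 : (1%g : gT) \in <[x]>%g by rewrite group1.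
    by rewrite mulnC exprM; move: (lg_eq1 h1); rewrite eqxx => /eqP ->; rewrite expr1n.
  move=> a b ha hb; rewrite -exprD -mulnDr !(mulnC j) !exprM; congr (_ ^+ _).
  rewrite -(prim_expr_mod hw) -[in RHS](prim_expr_mod hw); congr (_ ^+ _).
  apply/eqP; rewrite -eq_expg_mod_order expgD !lgP ?groupM //.
move=> z hz; rewrite big_map /= -mulr_sumr.
have -> : \sum_(i <- iota 0 e) w ^+ (i * lg z) = \sum_(i < e) (w ^+ lg z) ^+ i.
  rewrite -(big_mkord xpredT (fun i => (w ^+ lg z) ^+ i)).
  by rewrite /index_iota subn0; apply: eq_bigr => i _; rewrite -exprM mulnC.
rewrite -(lg_eq1 hz); have [h1|h1] := eqVneq (w ^+ lg z) 1.
  rewrite h1 ?eqxx; under eq_bigr do rewrite expr1n.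
  by rewrite sumr_const card_ord mulVr.
rewrite ?(negPf h1).
have : (w ^+ lg z) ^+ e - 1 = 0.
  by rewrite -exprM mulnC exprM (prim_expr_order hw) expr1n subrr.
rewrite subrX1 => /eqP; rewrite mulf_eq0 subr_eq0 (negPf h1) /= => /eqP ->.
by rewrite mulr0.
Qed.
End Cyc.

Lemma in_allpairsL (X Y Z : Type) (f : X -> Y -> Z) s t p :
  List.In p [seq f a b | a <- s, b <- t] ->
  exists a b, [/\ List.In a s, List.In b t & p = f a b].
Proof.
elim: s => //= a s IH; rewrite List.in_app_iff => -[/List.in_map_iff [b [<- hb]]|/IH].
  by exists a, b; split => //; left.
by case=> a' [b [ha hb ->]]; exists a', b; split => //; right.
Qed.

Section Ab.
Variables (n : nat) (zeta : O).
Hypothesis hz : n.-primitive_root zeta.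
Hypothesis hn : n%:R \is a @GRing.unit O.

Lemma ab_dspan (A : {group gT}) : abelian A -> (#|A| %| n)%N -> exists s, dspan A s.
Proof.
have [m] := ubnP #|A|; elim: m A => // m IH A hAm cA dA.
case: (boolP (A :==: 1%g)) => [/eqP A1|ntA].
  exists [:: (1, fun _ => 1)]; split.
    by move=> p [<-|//]; split => // a b _ _; rewrite mulr1.
  by move=> y; rewrite A1 inE => /eqP ->; rewrite big_cons big_nil eqxx mul1r addr0.
have [x xA ex] := exponent_witness (abelian_nil cA).
have dxn : (#[x]%g %| n)%N by rewrite (dvdn_trans (order_dvdG xA)).
have hw := dvdn_prim_root hz dxn.
have he : (#[x]%g)%:R \is a @GRing.unit O.
  by move: hn; rewrite -(divnK dxn) natrM unitrM => /andP[].
have [s1 [s1c s1d]] := cyc_dspan hw he.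
have /splitsP [H /complP [tiH defA]] := abelian_splits xA (esym ex) cA.
have sHA : H \subset A by rewrite -defA mulG_subr.
have sKA : <[x]>%g \subset A by rewrite cycle_subG.
have cAH := abelianS sHA cA.
have ox1 : (1 < #[x]%g)%N.
  rewrite ltn_neqAle order_gt0 andbT eq_sym; apply/negP => /eqP o1.
  by move: ntA; rewrite trivg_exponent ex o1 dvdnn.
have cardA : #|A| = (#[x]%g * #|H|)%N by rewrite -defA TI_cardMg.
have [s2 [s2c s2d]] : exists s, dspan H s.
  apply: IH => //; last by rewrite (dvdn_trans (cardSg sHA)).
  rewrite -ltnS (leq_trans _ hAm) // ltnS cardA -{1}(mul1n #|H|) ltn_mul2r ox1 andbT.
  exact: cardG_gt0.
have compl : H \in complements_to_in <[x]>%g A by apply/complP.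
have cKH : H \subset ('C(<[x]>%G))%g.
  by apply: (subset_trans sHA); apply: (subset_trans cA); apply: centS.
have nKA : (<[x]>%G <| A)%g by rewrite -sub_abelian_normal.
pose d := divgr <[x]>%G H; pose r := remgr <[x]>%G H.
have dM := divgrM compl cKH; have rM := remgrM compl nKA.
have dK y : y \in A -> d y \in <[x]>%g by move=> yA; apply: mem_divgr; rewrite defA.
have rH y : y \in A -> r y \in H by move=> yA; apply: mem_remgr; rewrite defA.
have d1 : d 1%g = 1%g by rewrite /d divgr_id.
have r1 : r 1%g = 1%g by rewrite /r remgr1.
exists [seq (p.1 * q.1, fun y => p.2 (d y) * q.2 (r y)) | p <- s1, q <- s2]; split.
  move=> pq hpq; have [p [q [hp hq ->]]] := in_allpairsL hpq; rewrite /=.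
  have [c1 m1] := s1c p hp; have [c2 m2] := s2c q hq.
  split; first by rewrite d1 r1 c1 c2 mulr1.
  move=> a b ha hb; rewrite /d /r dM // rM // m1 ?dK // m2 ?rH //.
  by rewrite !mulrA; congr (_ * _); rewrite -!mulrA; congr (_ * _); rewrite mulrC.
move=> y yA; rewrite big_allpairs_dep /=.
under eq_bigr => p _ do under eq_bigr => q _ do
  rewrite [_ * _]mulrACA.
under eq_bigr => p _ do rewrite -mulr_sumr s2d ?rH //.
rewrite -mulr_suml s1d ?dK // -natrM mulnb.
congr (GRing.natmul _ (nat_of_bool _)); apply/idP/idP.
  by case/andP => /eqP h1 /eqP h2; rewrite (divgr_eq <[x]>%G H y) -/d -/r h1 h2 mulg1.
by move/eqP ->; rewrite d1 r1 !eqxx.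
Qed.
End Ab.
End Chars.

Lemma eq_big_In (R : nmodType) (T : Type) (s : seq T) (F1 F2 : T -> R) :
  (forall p, List.In p s -> F1 p = F2 p) -> \sum_(p <- s) F1 p = \sum_(p <- s) F2 p.
Proof.
elim: s => [|q s IH] h; first by rewrite !big_nil.
by rewrite !big_cons h ?IH //; [move=> p hp; apply: h; right | left].
Qed.

Section Lin.
Variables (O : pzRingType) (V : lmodType O).

Lemma ol0 (f : V -> V) : Olinear f -> f 0 = 0.
Proof.
move=> h; have e := h 1 0 0; rewrite !scale1r !addr0 in e.
by apply: (addrI (f 0)); rewrite addr0 -e.
Qed.

Lemma olD (f : V -> V) : Olinear f -> forall x y, f (x + y) = f x + f y.
Proof. by move=> h x y; have := h 1 x y; rewrite !scale1r. Qed.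

Lemma olZ (f : V -> V) : Olinear f -> forall k x, f (k *: x) = k *: f x.
Proof. by move=> h k x; rewrite -[k *: x]addr0 h ol0 // addr0. Qed.

Lemma olS (f : V -> V) (I : Type) (r : seq I) (P : pred I) (F : I -> V) :
  Olinear f -> f (\sum_(i <- r | P i) F i) = \sum_(i <- r | P i) f (F i).
Proof. by move=> h; apply: (big_morph f (olD h) (ol0 h)). Qed.

Definition sp (S : V -> Prop) (x : V) : Prop :=
  exists s : seq (O * V), (forall p, List.In p s -> S p.2) /\
    x = \sum_(p <- s) p.1 *: p.2.

Lemma sp0 S : sp S 0.
Proof. by exists [::]; rewrite big_nil. Qed.

Lemma spE (S : V -> Prop) x : S x -> sp S x.
Proof.
by move=> h; exists [:: (1, x)]; split=> [p [<-|]//|]; rewrite big_seq1 scale1r.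
Qed.

Lemma spD S x y : sp S x -> sp S y -> sp S (x + y).
Proof.
move=> [s [hs ->]] [t [ht ->]]; exists (s ++ t); split; last by rewrite big_cat.
by move=> p /List.in_app_iff [/hs|/ht].
Qed.

Lemma spZ S k x : sp S x -> sp S (k *: x).
Proof.
move=> [s [hs ->]]; exists [seq (k * p.1, p.2) | p <- s]; split.
  by move=> p /List.in_map_iff [q [<- hq]]; exact: (hs q hq).
by rewrite big_map scaler_sumr; apply: eq_bigr => p _; rewrite scalerA.
Qed.

Lemma spS S (I : Type) (r : seq I) (P : pred I) (F : I -> V) :
  (forall i, P i -> sp S (F i)) -> sp S (\sum_(i <- r | P i) F i).
Proof.
move=> h; elim: r => [|i r IH]; first by rewrite big_nil; apply: sp0.
by rewrite big_cons; case: ifP => // Pi; apply: spD => //; apply: h.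
Qed.

Lemma spS_In S (T : Type) (r : seq T) (F : T -> V) :
  (forall i, List.In i r -> sp S (F i)) -> sp S (\sum_(i <- r) F i).
Proof.
elim: r => [|i r IH] h; first by rewrite big_nil; apply: sp0.
by rewrite big_cons; apply: spD; [apply: h; left | apply: IH => j hj; apply: h; right].
Qed.

Lemma sp_trans (S T : V -> Prop) x : (forall y, S y -> sp T y) -> sp S x -> sp T x.
Proof.
move=> h [s [hs ->]]; elim: s hs => [|q s IH] hs; first by rewrite big_nil; apply: sp0.
rewrite big_cons; apply: spD; first by apply: spZ; apply: h; apply: hs; left.
by apply: IH => p hp; apply: hs; right.
Qed.

Lemma in_spanE (S : V -> Prop) x : in_span S x <-> sp S x.
Proof.
split.
  move=> [n [c [s [hs ->]]]]; apply: spS => i _; apply: spZ; exact: spE.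
move=> [l [hl e]]; subst x; elim: l hl => [|q l IH] hl.
  by exists 0%N, (fun _ => 0), (fun _ => 0); split=> [[]//|]; rewrite ?big_nil ?big_ord0.
have [n [c [s [hs e]]]] := IH (fun p hp => hl p (or_intror hp)).
exists n.+1, (fun i => if unlift ord0 i is Some j then c j else q.1),
  (fun i => if unlift ord0 i is Some j then s j else q.2); split.
  by move=> i; case: unlift => [j|]; [apply: hs | apply: (hl q (or_introl erefl))].
by rewrite big_cons e big_ord_recl unlift_none; congr (_ + _); apply: eq_bigr => i _; rewrite liftK.
Qed.
End Lin.

Section Main.
Variables (N : nat) (hN1 : (1 < N)%N) (O : idomainType) (cusp : bool) (V : lmodType O).
Variables (sym : 'Z_N -> 'Z_N -> V) (diam : {unit 'Z_N} -> V -> V).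
Hypothesis hV : modsym_space cusp sym diam.
Variable th : {unit 'Z_N} -> O.
Hypothesis hth : is_char th.
Hypothesis hphi : (totient N)%:R \is a @GRing.unit O.

Local Notation G := {unit 'Z_N}.

Lemma chiM (chi : G -> O) : is_char chi -> forall a b, chi (a * b)%g = chi a * chi b.
Proof. by case. Qed.

Lemma chiV (chi : G -> O) : is_char chi -> forall a, chi a * chi (a^-1)%g = 1.
Proof. by move=> [h1 hM] a; rewrite -hM mulgV. Qed.

Lemma chiV' (chi : G -> O) : is_char chi -> forall a, chi (a^-1)%g * chi a = 1.
Proof. by move=> h a; rewrite mulrC chiV. Qed.

Lemma coprime_unit (a : G) : coprime N (val (val a)).
Proof. by have := valP a; rewrite /= -{1}(natr_Zp (val a)) unitZpE. Qed.

Lemma Zval_mul (g : nat) (a : G) : val (g%:R * val a : 'Z_N) = ((g * val (val a)) %% N)%N.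
Proof. by rewrite -{1}(natr_Zp (val a)) -natrM; apply: val_Zp_nat. Qed.

Lemma gcd_gu (g : nat) (a : G) : (g %| N)%N -> gcdn (val (g%:R * val a : 'Z_N)) N = g.
Proof.
move=> gN; rewrite Zval_mul gcdn_modl gcdnC Gauss_gcdl ?coprime_unit //.
by rewrite gcdnC; apply/gcdn_idPl.
Qed.

Lemma gcd_nz (x : 'Z_N) : gcdn (val x) N != N -> x != 0.
Proof. by apply: contra => /eqP ->; rewrite gcd0n. Qed.

Lemma gcd_unimod (x y : 'Z_N) : unimod x y = (gcdn (gcdn (val x) N) (gcdn (val y) N) == 1%N).
Proof. by rewrite /unimod gcdnACA gcdnn. Qed.

Definition okgh (g h : nat) : Prop :=
  [/\ (g %| N)%N, (h %| N)%N, coprime g h & cusp ==> (g != N) && (h != N)].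

Lemma valid_gh g h (a b : G) : okgh g h -> valid_pair cusp (g%:R * val a) (h%:R * val b).
Proof.
case=> gN hN cgh cu; rewrite /valid_pair gcd_unimod !gcd_gu //; move: cgh; rewrite /coprime => -> /=.
case: cusp cu => //= /andP[g1 h1]; apply/andP; split; apply: gcd_nz; rewrite gcd_gu //.
Qed.

Let hlin : forall a, Olinear (diam a). Proof. by case: hV => _ []. Qed.
Let hdiam : forall a u v, valid_pair cusp u v -> diam a (sym u v) = sym (val a * u) (val a * v).
Proof. by case: hV => _ []. Qed.

Lemma diam_sym g h (a b d : G) : okgh g h ->
  diam d (sym (g%:R * val a) (h%:R * val b)) = sym (g%:R * val (d*a)%g) (h%:R * val (d*b)%g).
Proof. by move=> ok; rewrite hdiam ?valid_gh // !FinRing.val_unitM; congr sym; rewrite mulrCA. Qed.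

Lemma alpha_diam g h (chi psi : G -> O) (d : G) : okgh g h -> is_char chi -> is_char psi ->
  diam d (alpha sym g h chi psi) = (chi d * psi d) *: alpha sym g h chi psi.
Proof.
move=> ok hc hp; rewrite /alpha olZ // olS //.
under eq_bigr => a _ do rewrite olS //.
under eq_bigr => a _ do under eq_bigr => b _ do rewrite olZ // diam_sym //.
rewrite scalerA mulrC -scalerA; congr (_ *: _).
rewrite scaler_sumr [RHS](reindex_inj (mulgI d)); apply: eq_bigr => a _.
rewrite scaler_sumr [RHS](reindex_inj (mulgI d)); apply: eq_bigr => b _.
rewrite scalerA; congr (_ *: _).
rewrite !invMg !chiM //.
transitivity ((chi (a^-1)%g * psi (b^-1)%g) * ((chi d * chi (d^-1)%g) * (psi d * psi (d^-1)%g))).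
  by rewrite !chiV // !mulr1.
by ring.
Qed.

Lemma eth_lin : Olinear (etheta diam th).
Proof.
move=> k x y; rewrite /etheta.
under eq_bigr => a _ do rewrite hlin scalerDr scalerA [_ * k]mulrC -scalerA.
by rewrite big_split /= scalerDr -scaler_sumr scalerA [_ * k]mulrC -scalerA.
Qed.

Definition psiof (chi : G -> O) : G -> O := fun b => th b * chi (b^-1)%g.

Lemma psi_char chi : is_char chi -> is_char (psiof chi).
Proof.
move=> hc; split; first by rewrite /psiof invg1 (proj1 hc) (proj1 hth) mulr1.
move=> a b; rewrite /psiof invMg !chiM //.
by ring.
Qed.

Lemma cardG : #|[set: G]| = totient N.
Proof. exact: (card_units_Zp (ltnW hN1)). Qed.

Lemma eth_alpha g h chi : okgh g h -> is_char chi ->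
  etheta diam th (alpha sym g h chi (psiof chi)) = alpha sym g h chi (psiof chi).
Proof.
move=> ok hc; rewrite /etheta.
have e a : th (a^-1)%g *: diam a (alpha sym g h chi (psiof chi)) = alpha sym g h chi (psiof chi).
  rewrite (alpha_diam _ ok hc (psi_char hc)) scalerA.
  suff -> : th (a^-1)%g * (chi a * psiof chi a) = 1 by rewrite scale1r.
  rewrite /psiof; transitivity ((th (a^-1)%g * th a) * (chi a * chi (a^-1)%g)); first by ring.
  by rewrite chiV' // chiV // mulr1.
under eq_bigr => a _ do rewrite e.
by rewrite sumr_const -cardsT cardG -scaler_nat scalerA mulVr // scale1r.
Qed.

Lemma Gcomm (x y : G) : (x * y = y * x)%g.
Proof. by apply: val_inj; rewrite !FinRing.val_unitM mulrC. Qed.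

Hypothesis hroot : exists zeta : O, (totient N).-primitive_root zeta.

Lemma delta : exists s : seq (O * (G -> O)),
  (forall p, List.In p s -> is_char p.2) /\
  forall z, \sum_(p <- s) p.1 * p.2 z = (z == 1%g)%:R.
Proof.
have [zeta hz] := hroot.
have cT : abelian [set: G] by apply/centsP => x _ y _; apply: Gcomm.
have dT : (#|[set: G]%G| %| totient N)%N by rewrite /= cardG.
have [s [sc sd]] := ab_dspan hz hphi cT dT.
exists s; split; last by move=> z; apply: sd; rewrite inE.
by move=> p /sc [h1 hm]; split => // a b; apply: hm; rewrite inE.
Qed.

Definition Sab g h (a b : G) := sym (g%:R * val a) (h%:R * val b).

Definition alphas g h (x : V) := exists chi, is_char chi /\ x = alpha sym g h chi (psiof chi).

Lemma dec g h (a b : G) : okgh g h -> sp (alphas g h) (etheta diam th (Sab g h a b)).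
Proof.
move=> ok; have [s [sc sd]] := delta.
pose x := (a * b^-1)%g.
pose k := ((totient N)%:R ^+ 2)^-1 : O.
have E1 : \sum_(p <- s) (p.1 * p.2 x) *: alpha sym g h p.2 (psiof p.2) =
   k *: \sum_(a' : G) \sum_(b' : G)
      (th (b'^-1)%g * ((x * b')%g == a')%:R) *: Sab g h a' b'.
  rewrite /alpha.
  under eq_bigr => p _ do rewrite scalerA [_ * k]mulrC -scalerA scaler_sumr.
  rewrite -scaler_sumr; congr (k *: _).
  rewrite exchange_big /=; apply: eq_bigr => a' _.
  under eq_bigr => p _ do rewrite scaler_sumr.
  rewrite exchange_big /=; apply: eq_bigr => b' _.
  under eq_bigr => p _ do rewrite scalerA.
  rewrite -scaler_suml /Sab; congr (_ *: _).
  rewrite eq_mulgV1 -sd mulr_sumr; apply: eq_big_In => p /sc hc.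
  rewrite /psiof invgK !chiM //.
  by ring.
have E2 : \sum_(a' : G) \sum_(b' : G)
      (th (b'^-1)%g * ((x * b')%g == a')%:R) *: Sab g h a' b' =
    \sum_(b' : G) th (b'^-1)%g *: Sab g h (x * b')%g b'.
  rewrite exchange_big /=; apply: eq_bigr => b' _.
  rewrite (bigD1 (x * b')%g) //= eqxx mulr1 big1 ?addr0 // => a' ne.
  by rewrite eq_sym (negPf ne) mulr0 scale0r.
have E3 : \sum_(b' : G) th (b'^-1)%g *: Sab g h (x * b')%g b' =
    th (b^-1)%g *: \sum_(d : G) th (d^-1)%g *: Sab g h (d * a)%g (d * b)%g.
  rewrite (reindex_inj (mulIg b)) scaler_sumr; apply: eq_bigr => d _.
  rewrite scalerA invMg chiM // [th _ * th _]mulrC; congr (_ *: Sab _ _ _ _).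
  by rewrite /x -mulgA [(d * b)%g]Gcomm mulKg Gcomm.
have E4 : etheta diam th (Sab g h a b) =
    ((totient N)%:R)^-1 *: \sum_(d : G) th (d^-1)%g *: Sab g h (d * a)%g (d * b)%g.
  by rewrite /etheta /Sab; congr (_ *: _); apply: eq_bigr => d _; rewrite diam_sym.
have E : etheta diam th (Sab g h a b) = ((totient N)%:R * th b) *:
    \sum_(p <- s) (p.1 * p.2 x) *: alpha sym g h p.2 (psiof p.2).
  rewrite E1 E2 E3 E4 !scalerA; congr (_ *: _).
  rewrite /k expr2 invrM //.
  transitivity (((totient N)%:R * ((totient N)%:R)^-1) * ((totient N)%:R)^-1 * (th b * th (b^-1)%g)).
    by rewrite divrr // mul1r chiV // mulr1.
  by ring.
rewrite E; apply: spZ; apply: spS_In => p hp; apply: spZ; apply: spE.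
by exists p.2; split => //; apply: sc.
Qed.

Lemma valN (x : 'Z_N) : (val x < N)%N.
Proof. by apply: (leq_trans (ltn_ord x)); rewrite Zp_cast. Qed.

Lemma Zval_nat n : val (n%:R : 'Z_N) = (n %% N)%N.
Proof. exact: val_Zp_nat. Qed.

Lemma lift_unit (u : 'Z_N) : exists a : G, u = (gcdn (val u) N)%:R * val a.
Proof.
have N0 : (0 < N)%N by apply: ltnW.
set x := val u; set g := gcdn x N.
have [x0|xpos] := posnP x.
  exists 1%g; rewrite /g x0 gcd0n mulr1; apply: val_inj; rewrite Zval_nat modnn.
  by rewrite -/x x0.
have g0 : (0 < g)%N by rewrite gcdn_gt0 N0 orbT.
set m := (N %/ g)%N; set u' := (x %/ g)%N.
have gx : (g %| x)%N := dvdn_gcdl x N.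
have gN : (g %| N)%N := dvdn_gcdr x N.
have ex : x = (u' * g)%N by rewrite divnK.
have eN : N = (m * g)%N by rewrite divnK.
have cu'm : coprime u' m.
  rewrite /coprime -(eqn_pmul2r g0) mul1n muln_gcdl -ex -eN.
  done.
have u'0 : (0 < u')%N by rewrite divn_gt0 // dvdn_leq.
have m0 : (0 < m)%N by rewrite divn_gt0 // dvdn_leq.
pose pi := [pred q : nat | ~~ (q %| u' * m)%N].
set t := (N`_pi)%N.
set a0 := (u' + t * m)%N.
have a00 : (0 < a0)%N by rewrite ltn_addr.
have ca0 : coprime a0 N.
  rewrite coprime_has_primes //; apply/hasPn => q qN; apply/negP => qa.
  move: qN qa; rewrite !mem_primes => /and3P [pq _ qN] /and3P [_ _ qa].
  have [qum|nqum] := boolP (q %| u' * m)%N.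
    have qt : ~~ (q %| t)%N.
      apply/negP => qt; have : q \in \pi(t).
        by rewrite mem_primes pq qt part_gt0.
      by rewrite (pi_of_part _ N0) inE => /andP [_]; rewrite inE /= qum.
    move: qum; rewrite Euclid_dvdM // => /orP [qu|qm].
      have qm : ~~ (q %| m)%N.
        apply/negP => qm; move: cu'm; rewrite /coprime => /eqP cg.
        have : (q %| gcdn u' m)%N by rewrite dvdn_gcd qu qm.
        rewrite cg dvdn1 => /eqP q1.
        by move: pq; rewrite q1.
      by move: qa; rewrite /a0 dvdn_addr // Euclid_dvdM // (negPf qt) (negPf qm).
    have qu : ~~ (q %| u')%N.
      apply/negP => qu; move: cu'm; rewrite /coprime => /eqP cg.
      have : (q %| gcdn u' m)%N by rewrite dvdn_gcd qu qm.
        rewrite cg dvdn1 => /eqP q1.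
      by move: pq; rewrite q1.
    by move: qa; rewrite /a0 dvdn_addl ?dvdn_mull // (negPf qu).
  have qt : (q %| t)%N.
    have : q \in \pi(t) by rewrite (pi_of_part _ N0) inE /= mem_primes pq N0 qN.
    by rewrite mem_primes => /and3P [].
  move: qa; rewrite /a0 dvdn_addl ?dvdn_mulr //.
  by move=> qu; move: nqum; rewrite (dvdn_mulr _ qu).
have ua : (a0%:R : 'Z_N) \is a GRing.unit by rewrite unitZpE // coprime_sym.
exists (Sub (a0%:R) ua : {unit 'Z_N}); rewrite SubK -natrM; apply: val_inj.
rewrite Zval_nat /a0 mulnDr (mulnC g u') -ex mulnCA (mulnC g m) -eN.
by rewrite addnC modnMDl modn_small // valN.
Qed.

Lemma gcd_neqN (u : 'Z_N) : u != 0 -> gcdn (val u) N != N.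
Proof.
apply: contra => /eqP /gcdn_idPr hN; apply/eqP; apply: val_inj => /=.
have [//|u0] := posnP (val u).
by have := dvdn_leq u0 hN; rewrite leqNgt valN.
Qed.

Lemma dec' (u v : 'Z_N) : valid_pair cusp u v ->
  sp (alphas (gcdn (val u) N) (gcdn (val v) N)) (etheta diam th (sym u v)).
Proof.
move=> /andP [hu hc]; set g := gcdn (val u) N; set h := gcdn (val v) N.
have [a ea] := lift_unit u; have [b eb] := lift_unit v.
have -> : sym u v = Sab g h a b by rewrite /Sab -ea -eb.
apply: dec; split; rewrite ?dvdn_gcdr //.
  by move: hu; rewrite gcd_unimod.
by case: cusp hc => //= /andP [u0 v0]; rewrite !gcd_neqN.
Qed.

Variables (ell : nat) (U : V -> V) (c : O).
Hypothesis hell : prime ell.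
Hypothesis hU : U_op cusp sym diam ell U.
Hypothesis hc : c \is a GRing.unit.
Hypothesis hUc : forall x : V, (exists y : V, x = etheta diam th y) -> U x = c *: x.

Lemma gcd_red (g' m2 k : nat) (a : G) : N = (ell * ell * g' * m2)%N ->
  gcdn (val (g'%:R * val a + (k * (N %/ ell))%:R : 'Z_N)) N = g'.
Proof.
move=> eN; have l0 : (0 < ell)%N by apply: prime_gt0.
have eNl : (N %/ ell)%N = (ell * g' * m2)%N by rewrite eN -!mulnA mulKn.
rewrite -(natr_Zp (val a)) -natrM -natrD Zval_nat gcdn_modl eNl.
set A := val (val a).
have -> : (g' * A + k * (ell * g' * m2))%N = ((A + k * (ell * m2)) * g')%N.
  by ring.
rewrite [X in gcdn _ X]eN.
have -> : (ell * ell * g' * m2)%N = ((ell * (ell * m2)) * g')%N.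
  by ring.
rewrite -muln_gcdl.
suff /eqP -> : coprime (A + k * (ell * m2)) (ell * (ell * m2)) by rewrite mul1n.
have cA : coprime (ell * m2) A.
  apply: (coprime_dvdl _ (coprime_unit a)).
  by apply/dvdnP; exists (ell * g')%N; rewrite eN; ring.
have cX : coprime (ell * m2) (A + k * (ell * m2)) by rewrite /coprime addnC gcdnMDl.
rewrite coprime_sym coprimeMl cX andbT.
by apply: coprime_dvdl cX; apply: dvdn_mulr.
Qed.

Lemma red g' h chi : (ell * ell * g' %| N)%N -> okgh (ell * g') h -> is_char chi ->
  sp (alphas g' h) (alpha sym (ell * g') h chi (psiof chi)).
Proof.
move=> dN ok hch; set al := alpha sym (ell * g') h chi (psiof chi).
have [Ulin _ Usym] := hU.
have eal : etheta diam th al = al by apply: eth_alpha.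
have hUa : U al = c *: al by apply: hUc; exists al.
have -> : al = c^-1 *: etheta diam th (U al).
  by rewrite hUa (olZ eth_lin) eal scalerA mulVr // scale1r.
apply: spZ.
have [m2 eN] : exists m2, N = (ell * ell * g' * m2)%N.
  by exists (N %/ (ell * ell * g'))%N; rewrite mulnC divnK.
case: ok => lgN hN cgh cu.
have l1 : (1 < ell)%N by apply: prime_gt1.
have g'N : g' != N.
  apply/negP => /eqP e; have N0 : (0 < N)%N by apply: ltnW.
  move: (dvdn_leq N0 dN); rewrite e; nia.
have cg'h : coprime g' h by apply: coprime_dvdl cgh; apply: dvdn_mull.
rewrite /al /alpha (olZ Ulin) (olZ eth_lin); apply: spZ.
rewrite (olS _ _ _ Ulin) (olS _ _ _ eth_lin); apply: spS => a _.
rewrite (olS _ _ _ Ulin) (olS _ _ _ eth_lin); apply: spS => b _.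
rewrite (olZ Ulin) (olZ eth_lin); apply: spZ.
rewrite natrM -mulrA Usym; last first.
  rewrite mulrA -natrM; apply: valid_gh; split => //.
rewrite (olS _ _ _ eth_lin); apply: spS => k _.
have hv : valid_pair cusp (g'%:R * val a + (k * (N %/ ell))%:R) (h%:R * val b).
  rewrite /valid_pair gcd_unimod (gcd_red _ _ eN) gcd_gu //; move: cg'h; rewrite /coprime => -> /=.
  case: cusp cu => //= /andP [_ hN']; apply/andP; split; apply: gcd_nz.
    by rewrite (gcd_red _ _ eN).
  by rewrite gcd_gu.
by have := dec' hv; rewrite (gcd_red _ _ eN) gcd_gu.
Qed.

Definition gensP (x : V) : Prop :=
    exists (chi : {unit 'Z_N} -> O) (g h : nat),
      [/\ is_char chi, (g %| N)%N, (h %| N)%N, coprime g h & ~~ (ell %| g * h)%N] /\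
      let psi := fun b => th b * chi (b^-1)%g in
      (  (~~ (cusp && ((g == N) || (h == N))) /\ x = alpha sym g h chi psi)
      \/ (~~ (cusp && (((ell ^ logn ell N * g)%N == N) || (h == N))) /\
          x = alpha sym (ell ^ logn ell N * g)%N h chi psi)).

Lemma claim t : forall g0 h chi, (t <= logn ell N)%N -> ~~ (ell %| g0)%N -> ~~ (ell %| h)%N ->
  (g0 %| N)%N -> (h %| N)%N -> coprime g0 h ->
  (cusp ==> ((ell ^ t * g0)%N != N) && (h != N)) -> is_char chi ->
  sp gensP (alpha sym (ell ^ t * g0) h chi (psiof chi)).
Proof.
have N0 : (0 < N)%N by apply: ltnW.
have cl t' g0 : ~~ (ell %| g0)%N -> coprime (ell ^ t') g0.
  by move=> ng; rewrite coprimeXl // prime_coprime.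
have dv t' g0 : (t' <= logn ell N)%N -> ~~ (ell %| g0)%N -> (g0 %| N)%N -> (ell ^ t' * g0 %| N)%N.
  by move=> ht ng gN; rewrite Gauss_dvd ?cl // gN andbT pfactor_dvdn.
elim: t => [|t IH] g0 h chi ht ng nh gN hN cgh cu hch.
  rewrite expn0 mul1n in cu *; apply: spE; exists chi, g0, h; split.
    by split => //; rewrite Euclid_dvdM // negb_or ng nh.
  by left; split => //; case: cusp cu => //=; rewrite negb_or.
have [et|lt] := eqVneq t.+1 (logn ell N).
  apply: spE; exists chi, g0, h; split.
    by split => //; rewrite Euclid_dvdM // negb_or ng nh.
  by right; rewrite -et; split => //; case: cusp cu => //=; rewrite negb_or.
have lt' : (t.+2 <= logn ell N)%N by rewrite ltn_neqAle lt ht.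
have e1 : (ell ^ t.+1 * g0)%N = (ell * (ell ^ t * g0))%N by rewrite expnS mulnA.
rewrite e1; apply: (sp_trans _ (red _ _ _)) => //.
- move=> y [chi' [hc' ->]]; apply: IH => //; first exact: ltnW.
  case: cusp cu => //= /andP [_ ->]; rewrite andbT.
  apply/negP => /eqP e; move: (dv _ _ ht ng gN); rewrite e1 e => /(dvdn_leq N0).
  have l1 : (1 < ell)%N by apply: prime_gt1.
  nia.
- have -> : (ell * ell * (ell ^ t * g0) = ell ^ t.+2 * g0)%N by rewrite !expnS; ring.
  by apply: dv.
- split; rewrite -?e1 //; first exact: dv.
  by rewrite coprimeMl coprimeXl // (prime_coprime _ hell) nh.
Qed.

Definition m1 : G := Sub (-1 : 'Z_N) (unitrN1 _).

Lemma val_m1 (b : G) : val (m1 * b)%g = - val b.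
Proof. by rewrite FinRing.val_unitM SubK mulN1r. Qed.

Lemma alpha_ext g h chi psi1 psi2 : (forall b, psi1 b = psi2 b) ->
  alpha sym g h chi psi1 = alpha sym g h chi psi2.
Proof.
by move=> e; rewrite /alpha; congr (_ *: _); apply: eq_bigr => a _; apply: eq_bigr => b _; rewrite e.
Qed.

Let hr2 : forall u v, valid_pair cusp u v -> sym u v = - sym (- v) u.
Proof. by case: hV => _ []. Qed.

Lemma swap g h chi psi : okgh g h -> is_char psi ->
  alpha sym g h chi psi = (- psi m1) *: alpha sym h g psi chi.
Proof.
move=> ok hp; rewrite /alpha scalerA [_ * (_ ^+ 2)^-1]mulrC -scalerA; congr (_ *: _).
rewrite exchange_big /= scaler_sumr [RHS](reindex_inj (mulgI m1)); apply: eq_bigr => b _.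
rewrite scaler_sumr; apply: eq_bigr => a _.
rewrite hr2 ?valid_gh // scalerN scalerA -scaleNr; congr (_ *: sym _ _).
  rewrite invMg chiM //.
  transitivity (- (chi (a^-1)%g * psi (b^-1)%g) * (psi m1 * psi (m1^-1)%g)); first by rewrite chiV // mulr1.
  by ring.
by rewrite val_m1 mulrN.
Qed.

Lemma ldecomp x : (0 < x)%N -> x = (ell ^ logn ell x * x`_(ell^'))%N /\ ~~ (ell %| x`_(ell^'))%N.
Proof.
move=> x0; split; first by rewrite -p_part partnC.
by rewrite -(p'natE _ hell); apply: part_pnat.
Qed.

Lemma all_nh g h chi : okgh g h -> ~~ (ell %| h)%N -> is_char chi ->
  sp gensP (alpha sym g h chi (psiof chi)).
Proof.
have N0 : (0 < N)%N by apply: ltnW.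
case=> gN hN cgh cu nh hch.
have g0 : (0 < g)%N := dvdn_gt0 N0 gN.
have [eg ng] := ldecomp g0.
have ht : (logn ell g <= logn ell N)%N by apply: dvdn_leq_log.
have gg : (g`_(ell^') %| g)%N by rewrite {2}eg dvdn_mull.
have g1N : (g`_(ell^') %| N)%N by apply: dvdn_trans gg gN.
have cg1 : coprime (g`_(ell^'))%N h by apply: coprime_dvdl gg cgh.
move: cu ht ng g1N cg1 eg; move: (logn ell g) (g`_(ell^'))%N => t g1 cu ht ng g1N cg1 eg.
rewrite eg in cu *; exact: claim.
Qed.

Lemma all_gh g h chi : okgh g h -> is_char chi -> sp gensP (alpha sym g h chi (psiof chi)).
Proof.
move=> ok hch; have [nh|lh] := boolP (~~ (ell %| h)%N); first exact: all_nh.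
move: lh; rewrite negbK => lh.
case: (ok) => gN hN cgh cu.
have ng : ~~ (ell %| g)%N.
  apply/negP => lg; have : (ell %| gcdn g h)%N by rewrite dvdn_gcd lg lh.
  by move: cgh; rewrite /coprime => /eqP ->; rewrite dvdn1 => /eqP e; move: hell; rewrite e.
rewrite (swap _ ok (psi_char hch)); apply: spZ.
rewrite (@alpha_ext _ _ _ _ (psiof (psiof chi))); last first.
  move=> b; rewrite /psiof invgK.
  transitivity ((th b * th (b^-1)%g) * chi b); last by ring.
  by rewrite chiV // mul1r.
apply: all_nh => //; last exact: psi_char.
split => //; first by rewrite coprime_sym.
by case: cusp cu => //=; rewrite andbC.
Qed.

Lemma okgcd (u v : 'Z_N) : valid_pair cusp u v -> okgh (gcdn (val u) N) (gcdn (val v) N).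
Proof.
move=> /andP [hu hc']; split; rewrite ?dvdn_gcdr //.
  by move: hu; rewrite gcd_unimod.
by case: cusp hc' => //= /andP [u0 v0]; rewrite !gcd_neqN.
Qed.

Lemma fwd x : (exists y, x = etheta diam th y) -> sp gensP x.
Proof.
move=> [y ->]; have [hsp _] := hV.
have := hsp y; rewrite in_spanE => -[s [hs ->]].
rewrite (olS _ _ _ eth_lin); apply: spS_In => p hp; rewrite (olZ eth_lin); apply: spZ.
have [u [v [hv ->]]] := hs p hp.
apply: sp_trans (dec' hv) => z [chi [hch ->]]; apply: all_gh => //; exact: okgcd.
Qed.

Lemma gens_fix y : gensP y -> etheta diam th y = y.
Proof.
have N0 : (0 < N)%N by apply: ltnW.
move=> [chi [g [h [[hch gN hN cgh ngh]]]]] /= [[cu ->]|[cu ->]].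
  apply: eth_alpha => //; split => //.
  by case: cusp cu => //=; rewrite negb_or.
move: ngh; rewrite Euclid_dvdM // negb_or => /andP [ng nh].
apply: eth_alpha => //; split => //.
- by rewrite Gauss_dvd ?coprimeXl ?prime_coprime // gN andbT pfactor_dvdn.
- by rewrite coprimeMl coprimeXl // (prime_coprime _ hell) nh.
- by case: cusp cu => //=; rewrite negb_or.
Qed.

Lemma bwd x : sp gensP x -> exists y, x = etheta diam th y.
Proof.
move=> hx; exists x; move: hx => [s [hs ->]].
rewrite (olS _ _ _ eth_lin); apply: eq_big_In => p hp.
by rewrite (olZ eth_lin) gens_fix //; apply: hs.
Qed.
End Main.


Unset Implicit Arguments.

Theorem corollary2p21
  (p M N : nat) (hp : prime p) (hpodd : odd p) (hM : (0 < M)%N)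
  (hpM : ~~ (p %| M * totient M)%N) (hN : N = (M * p)%N)
  (O : idomainType)
  (hOunit : (totient N)%:R \is a @GRing.unit O)
  (hOroot : exists zeta : O, (totient N).-primitive_root zeta)
  (cusp : bool) (V : lmodType O)
  (sym : 'Z_N -> 'Z_N -> V) (diam : {unit 'Z_N} -> V -> V)
  (hV : modsym_space cusp sym diam)
  (ell : nat) (hell : prime ell) (hellN : (ell %| N)%N)
  (theta : {unit 'Z_N} -> O) (htheta : is_char_Delta theta)
  (U : V -> V) (hU : U_op cusp sym diam ell U)
  (c : O) (hc : c \is a GRing.unit)
  (hUc : forall x : V, (exists y : V, x = etheta diam theta y) -> U x = c *: x) :
  let s := logn ell N in
  let gens : V -> Prop := fun x =>
    exists (chi : {unit 'Z_N} -> O) (g h : nat),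
      [/\ is_char chi, (g %| N)%N, (h %| N)%N, coprime g h & ~~ (ell %| g * h)%N] /\
      let psi := fun b => theta b * chi (b^-1)%g in
      (  (~~ (cusp && ((g == N) || (h == N))) /\ x = alpha sym g h chi psi)
      \/ (~~ (cusp && (((ell ^ s * g)%N == N) || (h == N))) /\
          x = alpha sym (ell ^ s * g)%N h chi psi)) in
  forall x : V, (exists y : V, x = etheta diam theta y) <-> in_span gens x.
Proof.
move=> s gens x.
have hN1 : (1 < N)%N.
  by rewrite hN; have := prime_gt1 hp; nia.
have hth := proj1 htheta.
rewrite in_spanE; split.
  by move=> h; exact: (fwd hN1 hV hth hOunit hOroot hell hU hc hUc h).
by move=> h; exact: (bwd hN1 hV hth hOunit hell h).
Qed.
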